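(* Assume: (a) $\mu>\mathrm{cf}(\mu)=\theta$, $\kappa=\mu^+$, $2^\theta<\kappa$; (b) $\mathcal{A}=\{A_\alpha:\alpha\in\kappa\}$ is $\mu$-scattered, i.e. each $A_\alpha\subseteq\mu$ has $|A_\alpha|=\theta$, and whenever $I\in[\kappa]^\kappa$ and $a_\alpha\subseteq A_\alpha$ with $|a_\alpha|=\theta$ for $\alpha\in I$, then $|\bigcup\{a_\alpha:\alpha\in I\}|=\mu$; (c) $\chi<\theta$ and $\binom{\theta^+}{\theta}\rightarrow\binom{\theta}{\theta}_\chi$. Then $\binom{\mu}{\theta^+}\rightarrow\binom{\mu}{\theta}_\chi$. If one assumes the stronger $\binom{\theta^+}{\theta}\rightarrow\binom{\theta^+}{\theta}_\chi$ and $2^{\theta^+}<\kappa$, then $\binom{\mu}{\theta^+}\rightarrow\binom{\mu}{\theta^+}_\chi$.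
   Context: Notation: $\binom{\lambda}{\kappa}\rightarrow\binom{\alpha}{\beta}_\chi$ means that for every coloring $c:\lambda\times\kappa\rightarrow\chi$ there are $A\subseteq\lambda$, $B\subseteq\kappa$ with $\mathrm{otp}(A)=\alpha$, $\mathrm{otp}(B)=\beta$ and $c\upharpoonright(A\times B)$ constant. *)

(* Defs.v *)
Definition all (X : Type) : X -> Prop := fun _ => True.

Definition card_le {X Y : Type} (A : X -> Prop) (B : Y -> Prop) : Prop :=
  exists f : X -> Y, (forall x, A x -> B (f x)) /\
    (forall x y, A x -> A y -> f x = f y -> x = y).

Definition card_lt {X Y : Type} (A : X -> Prop) (B : Y -> Prop) : Prop :=
  card_le A B /\ ~ card_le B A.

Definition equipotent {X Y : Type} (A : X -> Prop) (B : Y -> Prop) : Prop :=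
  exists f : X -> Y, (forall x, A x -> B (f x)) /\
    (forall x y, A x -> A y -> f x = f y -> x = y) /\
    (forall y, B y -> exists x, A x /\ f x = y).

(* A (strict) well-ordered type, i.e. (a representative of) an ordinal. *)
Record WO := {
  wo_car :> Type;
  wo_lt : wo_car -> wo_car -> Prop;
  wo_irrefl : forall x, ~ wo_lt x x;
  wo_trans : forall x y z, wo_lt x y -> wo_lt y z -> wo_lt x z;
  wo_total : forall x y, wo_lt x y \/ x = y \/ wo_lt y x;
  wo_wf : well_founded wo_lt
}.

Arguments wo_lt {w} _ _.

Definition below {X : WO} (x : X) : X -> Prop := fun y => wo_lt y x.

Definition is_cardinal (X : WO) : Prop :=
  forall x : X, card_lt (below x) (all X).

Definition otp_eq (X : WO) (A : X -> Prop) (Y : WO) : Prop :=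
  exists f : X -> Y,
    (forall x y, A x -> A y -> wo_lt x y -> wo_lt (f x) (f y)) /\
    (forall y : Y, exists x, A x /\ f x = y).

Definition otp_le (Y : WO) (X : WO) (C : X -> Prop) : Prop :=
  exists f : Y -> X, (forall y, C (f y)) /\
    (forall y y', wo_lt y y' -> wo_lt (f y) (f y')).

Definition cofinal (X : WO) (C : X -> Prop) : Prop :=
  forall x : X, exists y, C y /\ ~ wo_lt y x.

Definition is_cf (M T : WO) : Prop :=
  (exists C : M -> Prop, cofinal M C /\ otp_eq M C T) /\
  (forall C : M -> Prop, cofinal M C -> otp_le T M C).

Definition is_succ_card (M K : WO) : Prop :=
  card_lt (all M) (all K) /\ forall k : K, card_le (below k) (all M).

(* Polarized partition relation  (L over K) -> (Al over Be)_C *)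
Definition polarized (L K Al Be : WO) (C : Type) : Prop :=
  forall c : L -> K -> C,
    exists (A : L -> Prop) (B : K -> Prop),
      otp_eq L A Al /\ otp_eq K B Be /\
      (forall x y x' y', A x -> B y -> A x' -> B y' -> c x y = c x' y').

Definition scattered (M T K : WO) (A : K -> M -> Prop) : Prop :=
  (forall al : K, equipotent (A al) (all T)) /\
  (forall (I : K -> Prop) (a : K -> M -> Prop),
     equipotent I (all K) ->
     (forall al, I al -> (forall x, a al x -> A al x) /\ equipotent (a al) (all T)) ->
     equipotent (fun x => exists al, I al /\ a al x) (all M)).

(* Main.v *)
From Stdlib Require Import Classical ClassicalEpsilon FunctionalExtensionality PropExtensionality Lia Cantor.
Require Import Defs.

Lemma choice_fun {X Y : Type} (P : X -> Y -> Prop) :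
  (forall x, exists y, P x y) -> exists f : X -> Y, forall x, P x (f x).
Proof.
  intros H. exists (fun x => proj1_sig (constructive_indefinite_description _ (H x))).
  intros x. exact (proj2_sig (constructive_indefinite_description _ (H x))).
Qed.

Lemma cl_trans {X Y Z : Type} (A : X -> Prop) (B : Y -> Prop) (C : Z -> Prop) :
  card_le A B -> card_le B C -> card_le A C.
Proof.
  intros [f [Hf1 Hf2]] [g [Hg1 Hg2]]. exists (fun x => g (f x)). split; auto.
Qed.

Lemma cl_sub {X : Type} (A B : X -> Prop) : (forall x, A x -> B x) -> card_le A B.
Proof. intros H. exists (fun x => x). split; auto. Qed.

Lemma eqp_cl {X Y : Type} (A : X -> Prop) (B : Y -> Prop) : equipotent A B -> card_le A B.
Proof. intros [f [H1 [H2 _]]]. exists f; auto. Qed.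

Lemma surj_cl {X Y : Type} (x0 : X) (A : X -> Prop) (B : Y -> Prop) (f : X -> Y) :
  (forall y, B y -> exists x, A x /\ f x = y) -> card_le B A.
Proof.
  intros H.
  assert (H' : forall y, exists x, B y -> A x /\ f x = y).
  { intros y. destruct (classic (B y)) as [Hy|Hy].
    - destruct (H y Hy) as [x Hx]. exists x; auto.
    - exists x0; tauto. }
  destruct (choice_fun _ H') as [g Hg].
  exists g. split.
  - intros y Hy. apply (Hg y Hy).
  - intros y y' Hy Hy' E. destruct (Hg y Hy) as [_ E1]. destruct (Hg y' Hy') as [_ E2].
    rewrite <- E1, <- E2, E. reflexivity.
Qed.

Lemma eqp_rev {X Y : Type} (x0 : X) (A : X -> Prop) (B : Y -> Prop) :
  equipotent A B -> card_le B A.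
Proof. intros [f [_ [_ H]]]. exact (surj_cl x0 A B f H). Qed.

Lemma eqp_trans {X Y Z : Type} (A : X -> Prop) (B : Y -> Prop) (C : Z -> Prop) :
  equipotent A B -> equipotent B C -> equipotent A C.
Proof.
  intros [f [F1 [F2 F3]]] [g [G1 [G2 G3]]]. exists (fun x => g (f x)). split; [|split]; auto.
  intros z Hz. destruct (G3 z Hz) as [y [Hy E]]. destruct (F3 y Hy) as [x [Hx E']].
  exists x. subst. auto.
Qed.

Definition sq {X : Type} (S : X -> Prop) : X * X -> Prop := fun p => S (fst p) /\ S (snd p).
Definition prd {X Y : Type} (S : X -> Prop) (S' : Y -> Prop) : X * Y -> Prop :=
  fun p => S (fst p) /\ S' (snd p).

Lemma cl_prod {X Y X' Y' : Type} (A : X -> Prop) (B : Y -> Prop) (A' : X' -> Prop) (B' : Y' -> Prop) :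
  card_le A A' -> card_le B B' -> card_le (prd A B) (prd A' B').
Proof.
  intros [f [F1 F2]] [g [G1 G2]]. exists (fun p => (f (fst p), g (snd p))). split.
  - intros [x y] [H1 H2]; split; simpl in *; auto.
  - intros [x y] [x' y'] [H1 H2] [H1' H2'] E. simpl in *. injection E; intros.
    f_equal; auto.
Qed.

Lemma strict_inj (X : WO) {Y : WO} (A : X -> Prop) (f : X -> Y) :
  (forall x y, A x -> A y -> wo_lt x y -> wo_lt (f x) (f y)) ->
  forall x y, A x -> A y -> f x = f y -> x = y.
Proof.
  intros H x y Hx Hy E. destruct (wo_total X x y) as [L|[L|L]]; auto.
  - apply H in L; auto. rewrite E in L. destruct (wo_irrefl _ _ L).
  - apply H in L; auto. rewrite E in L. destruct (wo_irrefl _ _ L).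
Qed.

Lemma otp_eqp (X : WO) (A : X -> Prop) (Y : WO) : otp_eq X A Y -> equipotent A (all Y).
Proof.
  intros [f [H1 H2]]. exists f. split; [|split].
  - intros; exact I.
  - apply (strict_inj X A f H1).
  - intros y _. apply H2.
Qed.

Lemma cl_all_l {X Y : Type} (A : X -> Prop) (B : Y -> Prop) : card_le (all X) B -> card_le A B.
Proof. intros H. apply (cl_trans _ (all X)); auto. apply cl_sub. intros; exact I. Qed.

Lemma least (X : WO) (P : X -> Prop) : (exists x, P x) -> exists x, P x /\ forall y, P y -> ~ wo_lt y x.
Proof.
  intros [x Hx]. revert Hx. induction x as [x IH] using (well_founded_ind (wo_wf X)).
  intros Hx. destruct (classic (exists y, P y /\ wo_lt y x)) as [[y [Hy Ly]]|N].
  - exact (IH y Ly Hy).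
  - exists x. split; auto. intros y Hy Ly. apply N. eauto.
Qed.

Definition cstep (X Y : WO) (U : X -> Prop) (y0 : Y) (x : X) (rec : forall x', wo_lt x' x -> Y) : Y :=
  epsilon (inhabits y0) (fun y => (forall x' (h : wo_lt x' x), U x' -> wo_lt (rec x' h) y) /\
     (forall y', (forall x' (h : wo_lt x' x), U x' -> wo_lt (rec x' h) y') -> ~ wo_lt y' y)).

Definition cF (X Y : WO) (U : X -> Prop) (y0 : Y) : X -> Y :=
  Fix (wo_wf X) (fun _ => Y) (cstep X Y U y0).

Lemma cF_eq (X Y : WO) (U : X -> Prop) (y0 : Y) (x : X) :
  cF X Y U y0 x = epsilon (inhabits y0) (fun y =>
    (forall x', wo_lt x' x -> U x' -> wo_lt (cF X Y U y0 x') y) /\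
    (forall y', (forall x', wo_lt x' x -> U x' -> wo_lt (cF X Y U y0 x') y') -> ~ wo_lt y' y)).
Proof.
  unfold cF at 1. rewrite Fix_eq.
  - reflexivity.
  - intros z f g Hfg. assert (f = g) as ->.
    { apply functional_extensionality_dep; intro a. apply functional_extensionality_dep; intro b. apply Hfg. }
    reflexivity.
Qed.

Lemma coll (X Y : WO) (U : X -> Prop) (y0 : Y) :
  exists (f : X -> Y) (P : X -> Prop),
    (forall x, P x -> U x) /\
    (forall x x', P x -> U x' -> wo_lt x' x -> P x') /\
    (forall x x', P x -> P x' -> wo_lt x x' -> wo_lt (f x) (f x')) /\
    (forall x y, P x -> wo_lt y (f x) -> exists x', P x' /\ f x' = y) /\
    ((forall x, U x -> P x) \/ (forall y, exists x, P x /\ f x = y)).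
Proof.
  set (F := cF X Y U y0).
  set (ok := fun x => exists y, forall x', wo_lt x' x -> U x' -> wo_lt (F x') y).
  assert (Hspec : forall x, ok x ->
    (forall x', wo_lt x' x -> U x' -> wo_lt (F x') (F x)) /\
    (forall y', (forall x', wo_lt x' x -> U x' -> wo_lt (F x') y') -> ~ wo_lt y' (F x))).
  { intros x Hok. unfold F. rewrite cF_eq. apply epsilon_spec.
    destruct (least Y (fun y => forall x', wo_lt x' x -> U x' -> wo_lt (F x') y) Hok) as [y [H1 H2]].
    exists y. split; auto. }
  exists F, (fun x => U x /\ ok x).
  assert (Hdc : forall x x', U x /\ ok x -> U x' -> wo_lt x' x -> U x' /\ ok x').
  { intros x x' [Ux Ox] Ux' L. split; auto. exists (F x). intros x'' L' U''.
    apply (proj1 (Hspec x Ox)); auto. apply (wo_trans _ _ _ _ L' L). }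
  assert (Himg : forall x y, U x /\ ok x -> wo_lt y (F x) -> exists x', (U x' /\ ok x') /\ F x' = y).
  { intros x. induction x as [x IH] using (well_founded_ind (wo_wf X)).
    intros y [Ux Ox] Ly. destruct (Hspec x Ox) as [_ Hmin].
    destruct (classic (forall x', wo_lt x' x -> U x' -> wo_lt (F x') y)) as [Hb|Hb].
    - destruct (Hmin y Hb Ly).
    - apply not_all_ex_not in Hb. destruct Hb as [x' Hb].
      apply imply_to_and in Hb. destruct Hb as [L Hb]. apply imply_to_and in Hb. destruct Hb as [Ux' Hb].
      assert (Px' : U x' /\ ok x') by (apply (Hdc x); auto).
      destruct (wo_total Y y (F x')) as [L2|[E|L2]].
      + exact (IH x' L y Px' L2).
      + exists x'; auto.
      + contradiction. }
  split; [|split; [|split; [|split]]].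
  - intros x [H _]; auto.
  - exact Hdc.
  - intros x x' Px [Ux' Ox'] L. apply (proj1 (Hspec x' Ox')); auto. apply Px.
  - exact Himg.
  - destruct (classic (forall x, U x -> ok x)) as [Hall|Hn].
    + left. intros x Ux; split; auto.
    + right. apply not_all_ex_not in Hn. destruct Hn as [x0 Hn]. apply imply_to_and in Hn.
      destruct (least X (fun x => U x /\ ~ ok x) (ex_intro _ x0 Hn)) as [xs [[Uxs Nxs] Hxs]].
      intros y.
      assert (Hb : ~ forall x', wo_lt x' xs -> U x' -> wo_lt (F x') y) by (intro Hb; apply Nxs; exists y; exact Hb).
      apply not_all_ex_not in Hb. destruct Hb as [x' Hb].
      apply imply_to_and in Hb. destruct Hb as [L Hb]. apply imply_to_and in Hb. destruct Hb as [Ux' Hb].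
      assert (Ox' : ok x').
      { apply NNPP. intro N. apply (Hxs x'); auto. }
      destruct (wo_total Y y (F x')) as [L2|[E|L2]].
      * exact (Himg x' y (conj Ux' Ox') L2).
      * exists x'; auto.
      * contradiction.
Qed.

Lemma below_cl (Y : WO) (U : Y -> Prop) (ZT : Type) (Z : ZT -> Prop) :
  (forall y : Y, card_le (below y) Z) -> equipotent U (all Y) \/ card_le U Z.
Proof.
  intros hseg.
  destruct (classic (exists y : Y, True)) as [[y0 _]|NE].
  2:{ left. exists (fun x => x). split; [|split]; auto. intros; exact I.
      intros y _. exfalso. apply NE. exists y. exact I. }
  destruct (coll Y Y U y0) as [f [P [HPU [Hdc [Hinc [Himg Hd]]]]]].
  destruct (classic (forall x, U x -> P x)) as [HUP|HUP].
  - destruct (classic (forall y, exists x, P x /\ f x = y)) as [Hs|Hs].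
    + left. exists f. split; [|split].
      * intros; exact I.
      * intros x x' Hx Hx'. apply (strict_inj Y P f Hinc); auto.
      * intros y _. destruct (Hs y) as [x [Px E]]. exists x; auto.
    + right. apply not_all_ex_not in Hs. destruct Hs as [y Hy].
      apply (cl_trans _ (below y)); auto.
      exists f. split.
      * intros x Ux. destruct (wo_total Y (f x) y) as [L|[E|L]]; auto.
        -- exfalso. apply Hy. exists x; auto.
        -- exfalso. apply Hy. destruct (Himg x y (HUP x Ux) L) as [x' Hx']. exists x'; auto.
      * intros x x' Hx Hx'. apply (strict_inj Y P f Hinc); auto.
  - right. apply not_all_ex_not in HUP. destruct HUP as [u Hu]. apply imply_to_and in Hu.
    destruct Hu as [Uu Pu].
    destruct Hd as [Hd|Hd]; [exfalso; auto|].
    apply (cl_trans _ (all Y)). { apply cl_sub. intros; exact I. }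
    apply (cl_trans _ P).
    { apply (surj_cl y0 P (all Y) f). intros y _. apply Hd. }
    apply (cl_trans _ (below u)); auto.
    apply cl_sub. intros x Px. destruct (wo_total Y x u) as [L|[E|L]]; auto.
    + subst; contradiction.
    + exfalso. apply Pu. apply (Hdc x); auto.
Qed.

Lemma card_otp (M : WO) (U : M -> Prop) :
  is_cardinal M -> card_le (all M) U -> otp_eq M U M.
Proof.
  intros HM HU.
  destruct (classic (exists y : M, True)) as [[y0 _]|NE].
  2:{ exists (fun x => x). split; auto. intros y. exfalso. apply NE. exists y. exact I. }
  destruct (coll M M U y0) as [f [P [HPU [Hdc [Hinc [Himg Hd]]]]]].
  destruct (classic (forall x, U x -> P x)) as [HUP|HUP].
  - destruct (classic (forall y, exists x, P x /\ f x = y)) as [Hs|Hs].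
    + exists f. split.
      * intros x x' Ux Ux'. apply Hinc; auto.
      * intros y. destruct (Hs y) as [x [Px E]]. exists x; auto.
    + exfalso. apply not_all_ex_not in Hs. destruct Hs as [y Hy].
      apply (proj2 (HM y)). apply (cl_trans _ U); auto.
      exists f. split.
      * intros x Ux. destruct (wo_total M (f x) y) as [L|[E|L]]; auto.
        -- exfalso. apply Hy. exists x; auto.
        -- exfalso. apply Hy. destruct (Himg x y (HUP x Ux) L) as [x' Hx']. exists x'; auto.
      * intros x x' Hx Hx'. apply (strict_inj M P f Hinc); auto.
  - exfalso. apply not_all_ex_not in HUP. destruct HUP as [u Hu]. apply imply_to_and in Hu.
    destruct Hu as [Uu Pu].
    destruct Hd as [Hd|Hd]; [auto|].
    apply (proj2 (HM u)).
    apply (cl_trans _ P).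
    { apply (surj_cl y0 P (all M) f). intros y _. apply Hd. }
    apply cl_sub. intros x Px. destruct (wo_total M x u) as [L|[E|L]]; auto.
    + subst; contradiction.
    + exfalso. apply Pu. apply (Hdc x); auto.
Qed.

Lemma cmp (X Y : WO) (y0 : Y) : card_le (all X) (all Y) \/ exists x : X, card_le (all Y) (below x).
Proof.
  destruct (coll X Y (all X) y0) as [f [P [HPU [Hdc [Hinc [Himg Hd]]]]]].
  destruct (classic (forall x, all X x -> P x)) as [HUP|HUP].
  - left. exists f. split. intros; exact I.
    intros x x' _ _. apply (strict_inj X P f Hinc); apply HUP; exact I.
  - right. apply not_all_ex_not in HUP. destruct HUP as [u Hu]. apply imply_to_and in Hu.
    destruct Hu as [Uu Pu]. exists u.
    destruct Hd as [Hd|Hd]; [exfalso; auto|].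
    apply (cl_trans _ P).
    { apply (surj_cl u P (all Y) f). intros y _. apply Hd. }
    apply cl_sub. intros x Px. destruct (wo_total X x u) as [L|[E|L]]; auto.
    + subst; contradiction.
    + exfalso. apply Pu. apply (Hdc x); auto.
Qed.

Definition natWO : WO.
Proof.
  refine {| wo_car := nat; wo_lt := lt |}.
  - intros x; lia.
  - intros; lia.
  - intros x y; lia.
  - exact PeanoNat.Nat.lt_wf_0.
Defined.

Lemma nat_cmp (W : WO) (S : W -> Prop) : card_le S (all nat) \/ card_le (all nat) S.
Proof.
  destruct (coll W natWO S 0) as [f [P [HPU [Hdc [Hinc [Himg Hd]]]]]].
  destruct (classic (forall x, S x -> P x)) as [HUP|HUP].
  - left. exists f. split. intros; exact I.
    intros x x' Hx Hx'. apply (strict_inj W P f Hinc); apply HUP; auto.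
  - right. destruct Hd as [Hd|Hd]; [exfalso; auto|].
    apply (cl_trans _ P).
    { destruct (Hd 0) as [w0 _]. apply (surj_cl w0 P (all natWO) f). intros y _. apply Hd. }
    apply cl_sub; auto.
Qed.

Lemma nat_chain (X : WO) (x0 : X) : (forall x : X, exists y, wo_lt x y) -> card_le (all nat) (all X).
Proof.
  intros H. destruct (choice_fun _ H) as [nx Hnx].
  set (e := fix e n := match n with 0 => x0 | S n => nx (e n) end).
  assert (He : forall n m, n < m -> wo_lt (e n) (e m)).
  { intros n m L. induction L.
    - apply Hnx.
    - apply (wo_trans _ _ _ _ IHL (Hnx _)). }
  exists e. split. intros; exact I.
  intros n m _ _ E. destruct (PeanoNat.Nat.lt_total n m) as [L|[L|L]]; auto.
  - apply He in L. rewrite E in L. destruct (wo_irrefl _ _ L).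
  - apply He in L. rewrite E in L. destruct (wo_irrefl _ _ L).
Qed.

Lemma hotel {X : Type} (Sp : X -> Prop) (m : X) :
  card_le (all nat) Sp -> Sp m -> card_le Sp (fun x => Sp x /\ x <> m).
Proof.
  intros [e [He1 He2]] Sm.
  assert (Einj : forall n k, e n = e k -> n = k) by (intros; apply He2; auto; exact I).
  set (h := fun x => match excluded_middle_informative (exists n, x = e n) with
                     | left H => e (S (proj1_sig (constructive_indefinite_description _ H)))
                     | right _ => x end).
  assert (Hh : forall x, (exists n, x = e n /\ h x = e (S n)) \/ ((forall n, x <> e n) /\ h x = x)).
  { intros x. unfold h. destruct (excluded_middle_informative _) as [H|H].
    - left. destruct (constructive_indefinite_description _ H) as [n Hn]. simpl. eauto.
    - right. split; auto. intros n E. apply H; eauto. }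
  set (sg := fun y => match excluded_middle_informative (y = e 0) with
                      | left _ => m
                      | right _ => match excluded_middle_informative (y = m) with
                                   | left _ => e 0 | right _ => y end end).
  exists (fun x => sg (h x)).
  assert (hne : forall x, h x <> e 0).
  { intros x. destruct (Hh x) as [[n [_ E]]|[N E]]; rewrite E.
    - intro E2. apply Einj in E2. discriminate.
    - apply N. }
  assert (hS : forall x, Sp x -> Sp (h x)).
  { intros x Sx. destruct (Hh x) as [[n [_ E]]|[N E]]; rewrite E; auto. apply He1; exact I. }
  split.
  - intros x Sx. unfold sg. destruct (excluded_middle_informative (h x = e 0)) as [E|E].
    + destruct (hne x E).
    + destruct (excluded_middle_informative (h x = m)) as [E'|E'].
      * split. apply He1; exact I. intro E2. apply E. rewrite E', <- E2. reflexivity.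
      * split; auto.
  - intros x y Sx Sy E.
    assert (h x = h y).
    { unfold sg in E. pose proof (hne x). pose proof (hne y).
      destruct (excluded_middle_informative (h x = e 0)); [contradiction|].
      destruct (excluded_middle_informative (h y = e 0)); [contradiction|].
      destruct (excluded_middle_informative (h x = m)) as [E1|E1];
      destruct (excluded_middle_informative (h y = m)) as [E2|E2]; congruence. }
    destruct (Hh x) as [[n [Ex Hx]]|[Nx Hx]]; destruct (Hh y) as [[k [Ey Hy]]|[Ny Hy]].
    + rewrite Hx, Hy in H. apply Einj in H. injection H; intros; subst; auto.
    + rewrite Hx, Hy in H. exfalso. apply (Ny (S n)). auto.
    + rewrite Hx, Hy in H. exfalso. apply (Nx (S k)). auto.
    + congruence.
Qed.

Definition mx {W : WO} (a b : W) : W :=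
  if excluded_middle_informative (wo_lt a b) then b else a.

Lemma mx_cases {W : WO} (a b : W) : (wo_lt a b /\ mx a b = b) \/ (~ wo_lt a b /\ mx a b = a).
Proof. unfold mx. destruct (excluded_middle_informative _); auto. Qed.

Lemma mx_ge1 {W : WO} (a b : W) : ~ wo_lt (mx a b) a.
Proof.
  destruct (mx_cases a b) as [[L E]|[L E]]; rewrite E.
  - intro L2. apply (wo_irrefl W a). apply (wo_trans _ _ _ _ L L2).
  - apply wo_irrefl.
Qed.

Lemma mx_ge2 {W : WO} (a b : W) : ~ wo_lt (mx a b) b.
Proof.
  destruct (mx_cases a b) as [[L E]|[L E]]; rewrite E.
  - apply wo_irrefl.
  - intro L2. destruct (wo_total W a b) as [H|[H|H]].
    + contradiction.
    + subst. apply (wo_irrefl _ _ L2).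
    + apply (wo_irrefl _ _ (wo_trans _ _ _ _ L2 H)).
Qed.

Definition cano {W : WO} (p q : W * W) : Prop :=
  wo_lt (mx (fst p) (snd p)) (mx (fst q) (snd q)) \/
  (mx (fst p) (snd p) = mx (fst q) (snd q) /\
   (wo_lt (fst p) (fst q) \/ (fst p = fst q /\ wo_lt (snd p) (snd q)))).

Lemma cano_wf (W : WO) : well_founded (@cano W).
Proof.
  assert (H : forall m a b, mx a b = m -> Acc (@cano W) (a, b)).
  { intros m. induction m as [m IHm] using (well_founded_ind (wo_wf W)).
    intros a. induction a as [a IHa] using (well_founded_ind (wo_wf W)).
    intros b. induction b as [b IHb] using (well_founded_ind (wo_wf W)).
    intros E. constructor. intros [c d] Hq. unfold cano in Hq; simpl in Hq.
    destruct Hq as [L|[E2 [L|[E3 L]]]].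
    - rewrite E in L. exact (IHm _ L c d eq_refl).
    - rewrite E in E2. exact (IHa c L d E2).
    - subst c. rewrite E in E2. exact (IHb d L E2). }
  intros [a b]. exact (H _ a b eq_refl).
Qed.

Definition canoWO (W : WO) : WO.
Proof.
  refine {| wo_car := (W * W)%type; wo_lt := @cano W |}.
  - intros [a b] [L|[_ [L|[_ L]]]]; simpl in *; apply (wo_irrefl _ _ L).
  - intros [a b] [c d] [e f]; unfold cano; simpl.
    intros [L1|[E1 H1]] [L2|[E2 H2]].
    + left. apply (wo_trans _ _ _ _ L1 L2).
    + left. rewrite <- E2. auto.
    + left. rewrite E1. auto.
    + right. split. congruence.
      destruct H1 as [L1|[E3 L1]]; destruct H2 as [L2|[E4 L2]].
      * left. apply (wo_trans _ _ _ _ L1 L2).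
      * left. subst. auto.
      * left. subst. auto.
      * right. split. congruence. apply (wo_trans _ _ _ _ L1 L2).
  - intros [a b] [c d]; unfold cano; simpl.
    destruct (wo_total W (mx a b) (mx c d)) as [L|[E|L]].
    + left; left; exact L.
    + destruct (wo_total W a c) as [L1|[E1|L1]].
      * left; right; split; [exact E|left; exact L1].
      * subst c. destruct (wo_total W b d) as [L2|[E2|L2]].
        -- left; right; split; [exact E|right; split; [reflexivity|exact L2]].
        -- right; left. subst; reflexivity.
        -- right; right; right; split; [symmetry; exact E|right; split; [reflexivity|exact L2]].
      * right; right; right; split; [symmetry; exact E|left; exact L1].
    + right; right; left; exact L.
  - apply cano_wf.
Defined.

Definition Hp {W : WO} (S : W -> Prop) : Prop :=
  card_le (sq S) S \/ card_le (sq S) (all nat).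

Lemma nat_sq : card_le (all (nat * nat)) (all nat).
Proof.
  exists Cantor.to_nat. split. intros; exact I.
  intros p q _ _ E. rewrite <- (Cantor.cancel_of_to p), <- (Cantor.cancel_of_to q), E. reflexivity.
Qed.

Lemma sq_mono {W : WO} (S S' : W -> Prop) (Z : Type) (ZP : Z -> Prop) :
  card_le S S' -> card_le (sq S') ZP -> card_le (sq S) ZP.
Proof.
  intros H1 H2. apply (cl_trans _ (sq S')); auto.
  apply (cl_prod S S S' S'); auto.
Qed.

Lemma sq_nat {X : Type} (S : X -> Prop) : card_le S (all nat) -> card_le (sq S) (all nat).
Proof.
  intros H. apply (cl_trans _ (prd (all nat) (all nat))).
  - exact (cl_prod S S _ _ H H).
  - apply (cl_trans _ (all (nat*nat))); [apply cl_sub; intros; exact I|apply nat_sq].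
Qed.

Lemma hess_step (W : WO) (S : W -> Prop) :
  (forall x y, S x -> wo_lt y x -> S y) ->
  (forall v, S v -> Hp (below v)) -> Hp S.
Proof.
  intros Hdc IH.
  destruct (nat_cmp W S) as [Hn|Hn].
  { right. apply sq_nat; auto. }
  destruct (classic (exists v, S v /\ card_le S (below v))) as [[v [Sv Hv]]|Hc].
  { destruct (IH v Sv) as [H|H].
    - left. apply (sq_mono S (below v)); auto.
      apply (cl_trans _ (below v)); auto. apply cl_sub. intros y Ly. apply (Hdc v); auto.
    - right. apply (sq_mono S (below v)); auto. }
  destruct (classic (card_le S (all nat))) as [Hs|Hs].
  { right. apply sq_nat; auto. }
  assert (Hnm : forall m, S m -> exists v, S v /\ wo_lt m v).
  { intros m Sm. apply NNPP. intro N. apply Hc. exists m. split; auto.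
    apply (cl_trans _ _ _ (hotel S m Hn Sm)). apply cl_sub. intros x [Sx Nx].
    destruct (wo_total W x m) as [L|[E|L]]; auto. contradiction.
    exfalso. apply N. eauto. }
  assert (Hsmall : forall v, S v -> ~ card_le S (sq (below v))).
  { intros v Sv Hl. destruct (IH v Sv) as [H|H].
    - apply Hc. exists v. split; auto. apply (cl_trans _ _ _ Hl H).
    - apply Hs. apply (cl_trans _ _ _ Hl H). }
  destruct Hn as [e [He1 _]]. pose (w0 := e 0). assert (Sw0 : S w0) by (apply He1; exact I).
  destruct (coll (canoWO W) W (sq S) w0) as [f [P [HPU [HPdc [Hinc [Himg Hd]]]]]].
  destruct (classic (forall p, sq S p -> P p /\ S (f p))) as [Hgood|Hbad].
  { left. exists f. split.
    - intros p Sp. apply Hgood; auto.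
    - intros p q Sp Sq. apply (strict_inj (canoWO W) P f Hinc); apply Hgood; auto. }
  exfalso.
  assert (Hex : exists p, sq S p /\ forall y, S y -> exists q, sq S q /\ @cano W q p /\ f q = y).
  { apply not_all_ex_not in Hbad. destruct Hbad as [p Hp]. apply imply_to_and in Hp. destruct Hp as [Sp Hp].
    destruct (classic (P p)) as [Pp|Pp].
    - assert (NS : ~ S (f p)) by tauto.
      exists p. split; auto. intros y Sy.
      assert (Ly : wo_lt y (f p)).
      { destruct (wo_total W y (f p)) as [L|[E|L]]; auto. subst; contradiction.
        exfalso. apply NS. apply (Hdc y); auto. }
      destruct (Himg p y Pp Ly) as [q [Pq E]]. exists q. split; [apply HPU; auto|split; auto].
      destruct (wo_total (canoWO W) q p) as [L|[E2|L]]; auto.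
      + subst q. rewrite E in Ly. destruct (wo_irrefl _ _ Ly).
      + exfalso. pose proof (Hinc p q Pp Pq L) as L2. rewrite E in L2.
        apply (wo_irrefl _ _ (wo_trans _ _ _ _ L2 Ly)).
    - destruct Hd as [Hd|Hd]. { exfalso. apply Pp. apply Hd. exact Sp. }
      exists p. split; auto. intros y Sy. destruct (Hd y) as [q [Pq E]].
      exists q. split; [apply HPU; auto|split; auto].
      destruct (wo_total (canoWO W) q p) as [L|[E2|L]]; auto.
      + subst q. contradiction.
      + exfalso. apply Pp. apply (HPdc q); auto. }
  destruct Hex as [p [Sp Hp]].
  assert (Sm : S (mx (fst p) (snd p))).
  { destruct (mx_cases (fst p) (snd p)) as [[_ E]|[_ E]]; rewrite E; apply Sp. }
  destruct (Hnm _ Sm) as [v [Sv Lv]].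
  apply (Hsmall v Sv).
  apply (cl_trans _ (fun q => sq S q /\ @cano W q p)).
  { apply (surj_cl p _ S f). intros y Sy. destruct (Hp y Sy) as [q [Sq [Lq E]]]. exists q; auto. }
  apply cl_sub. intros [a b] [_ Lq]. unfold cano in Lq; simpl in Lq.
  assert (Hm : wo_lt (mx a b) v).
  { destruct Lq as [L|[E _]].
    - apply (wo_trans _ _ _ _ L Lv).
    - rewrite E; auto. }
  split; simpl.
  - destruct (wo_total W a (mx a b)) as [L|[E|L]].
    + apply (wo_trans _ _ _ _ L Hm).
    + rewrite E; auto.
    + destruct (mx_ge1 a b L).
  - destruct (wo_total W b (mx a b)) as [L|[E|L]].
    + apply (wo_trans _ _ _ _ L Hm).
    + rewrite E; auto.
    + destruct (mx_ge2 a b L).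
Qed.

Lemma hess_seg (W : WO) (w : W) : Hp (below w).
Proof.
  induction w as [w IH] using (well_founded_ind (wo_wf W)).
  apply hess_step.
  - intros x y Lx Ly. apply (wo_trans _ _ _ _ Ly Lx).
  - exact IH.
Qed.

Lemma hess (W : WO) (w0 : W) : (forall x : W, exists y, wo_lt x y) ->
  card_le (all (W * W)) (all W).
Proof.
  intros Hnm.
  assert (H : Hp (all W)).
  { apply hess_step. intros; exact I. intros v _. apply hess_seg. }
  apply (cl_trans _ (sq (all W))). { apply cl_sub. intros; split; exact I. }
  destruct H as [H|H]; auto.
  apply (cl_trans _ _ _ H). apply nat_chain; auto.
Qed.

Lemma PH (M K : WO) (X : Type) (L : X -> Prop) (I : K -> Prop) (g : K -> X) (m0 : M) (k0 : K) :
  is_succ_card M K -> card_le (all (M * M)) (all M) ->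
  equipotent I (all K) -> (forall a, I a -> L (g a)) -> card_le L (all M) ->
  exists x, L x /\ equipotent (fun a => I a /\ g a = x) (all K).
Proof.
  intros [[_ HKM] Hseg] HMM HI HL [h [_ Hh]].
  apply NNPP. intro N.
  assert (Hf : forall x, exists e : K -> M, L x ->
     forall a b, (I a /\ g a = x) -> (I b /\ g b = x) -> e a = e b -> a = b).
  { intros x. destruct (classic (L x)) as [Lx|Lx].
    - destruct (below_cl K (fun a => I a /\ g a = x) M (all M) Hseg) as [H|[e [_ He]]].
      + exfalso. apply N. exists x. auto.
      + exists e. intros _. exact He.
    - exists (fun _ => m0). intros; contradiction. }
  destruct (choice_fun _ Hf) as [E HE].
  apply HKM.
  apply (cl_trans _ I). { apply (eqp_rev k0 I (all K) HI). }
  apply (cl_trans _ (all (M * M))); auto.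
  exists (fun a => (h (g a), E (g a) a)). split. intros; exact Logic.I.
  intros a b Ia Ib Eq. injection Eq as E1 E2.
  apply Hh in E1; auto. rewrite <- E1 in E2.
  apply (HE (g a) (HL a Ia) a b); auto.
Qed.

Lemma lt_K (M K : WO) (Z : Type) (k0 : K) :
  is_succ_card M K -> card_lt (all Z) (all K) -> card_le (all Z) (all M).
Proof.
  intros [[_ HKM] Hseg] [[i [_ Hi]] HKZ].
  destruct (classic (exists z : Z, True)) as [[z0 _]|NZ].
  2:{ exists (fun z => False_rect M (NZ (ex_intro _ z I))). split.
      intros z; destruct (NZ (ex_intro _ z I)). intros z; destruct (NZ (ex_intro _ z I)). }
  destruct (below_cl K (fun k => exists z, i z = k) M (all M) Hseg) as [H|H].
  - exfalso. apply HKZ. destruct H as [f [_ [_ Hs]]].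
    apply (surj_cl z0 (all Z) (all K) (fun z => f (i z))).
    intros k _. destruct (Hs k I) as [u [[z Ez] Eu]]. exists z. split. exact Logic.I. congruence.
  - apply (cl_trans _ (fun k => exists z, i z = k)); auto.
    exists i. split. intros z _; eauto. intros x y _ _. apply Hi; exact Logic.I.
Qed.

Lemma prop_bool (X : Type) : card_le (all (X -> Prop)) (all (X -> bool)).
Proof.
  exists (fun P t => if excluded_middle_informative (P t) then true else false).
  split. intros; exact Logic.I.
  intros P Q _ _ E. apply functional_extensionality. intros t.
  apply propositional_extensionality.
  pose proof (f_equal (fun h => h t) E) as Et. simpl in Et.
  destruct (excluded_middle_informative (P t)); destruct (excluded_middle_informative (Q t));
    try discriminate; tauto.
Qed.

Lemma bounded (T Tp : WO) (B : Tp -> Prop) :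
  is_succ_card T Tp -> card_le (all (T * T)) (all T) -> (forall y : Tp, exists y', wo_lt y y') ->
  card_le B (all T) -> exists b, forall z, B z -> wo_lt z b.
Proof.
  intros [[_ HTpT] Hseg] HTT Hnm [h [_ Hh]].
  apply NNPP. intro N.
  assert (HZ : forall y : Tp, exists z, B z /\ wo_lt y z).
  { intros y. destruct (Hnm y) as [y' Ly].
    apply NNPP. intro N2. apply N. exists y'. intros z Bz.
    destruct (wo_total Tp z y') as [L|[E|L]]; auto.
    - exfalso. apply N2. exists z. subst. auto.
    - exfalso. apply N2. exists z. split; auto. apply (wo_trans _ _ _ _ Ly L). }
  destruct (choice_fun _ HZ) as [Z HZs].
  assert (HE : forall k : Tp, exists e : Tp -> T, forall a b, below k a -> below k b -> e a = e b -> a = b).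
  { intros k. destruct (Hseg k) as [e [_ He]]. exists e. exact He. }
  destruct (choice_fun _ HE) as [E HEs].
  apply HTpT. apply (cl_trans _ (all (T * T))); auto.
  exists (fun y => (h (Z y), E (Z y) y)). split. intros; exact Logic.I.
  intros a b _ _ Eq. injection Eq as E1 E2.
  apply Hh in E1; try apply HZs. rewrite <- E1 in E2.
  apply (HEs (Z a)); auto; unfold below. apply HZs. rewrite E1. apply HZs.
Qed.

Lemma succ_nomax (T Tp : WO) : is_succ_card T Tp -> card_le (all nat) (all T) ->
  forall y : Tp, exists y', wo_lt y y'.
Proof.
  intros [[HTTp HTpT] Hseg] Hn m. apply NNPP. intro N. apply HTpT.
  assert (Hn' : card_le (all nat) (all Tp)) by (apply (cl_trans _ _ _ Hn HTTp)).
  apply (cl_trans _ _ _ (hotel (all Tp) m Hn' I)).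
  apply (cl_trans _ (below m)); auto.
  apply cl_sub. intros x [_ Nx]. destruct (wo_total Tp x m) as [L|[E|L]]; auto.
  contradiction. exfalso. apply N. eauto.
Qed.

Definition homog (K Z Bt : WO) : Prop :=
  forall (B : K -> Z -> Prop) (I : K -> Prop), equipotent I (all K) ->
    (forall a, I a -> otp_eq Z (B a) Bt) ->
    exists I', (forall a, I' a -> I a) /\ equipotent I' (all K) /\
      exists a0, I' a0 /\ forall a, I' a -> forall z, B a z <-> B a0 z.

Lemma eqp_elem {X Y : Type} (A : X -> Prop) (y : Y) : equipotent A (all Y) -> exists x, A x.
Proof. intros [f [_ [_ H]]]. destruct (H y I) as [x [Hx _]]. eauto. Qed.

Lemma homog_direct (M K Z Bt : WO) (m0 : M) (k0 : K) :
  is_succ_card M K -> card_le (all (M * M)) (all M) ->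
  card_le (all (Z -> Prop)) (all M) -> homog K Z Bt.
Proof.
  intros HK HMM HZ B I HI HB.
  destruct (PH M K (Z -> Prop) (all _) I B m0 k0 HK HMM HI (fun _ _ => Logic.I) HZ) as [x [_ Hx]].
  exists (fun a => I a /\ B a = x). split; [|split]; auto.
  - intros a [Ia _]; auto.
  - destruct (eqp_elem _ k0 Hx) as [a0 Ha0]. exists a0. split; auto.
    intros a [_ Ea] z. rewrite Ea, (proj2 Ha0). tauto.
Qed.

Lemma homog_bounded (M K T Tp : WO) (m0 : M) (k0 : K) (tp0 : Tp) :
  is_succ_card M K -> card_le (all (M * M)) (all M) ->
  is_succ_card T Tp -> card_le (all (T * T)) (all T) -> (forall y : Tp, exists y', wo_lt y y') ->
  card_le (all Tp) (all M) -> card_le (all (T -> Prop)) (all M) -> homog K Tp T.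
Proof.
  intros HK HMM HTp HTT Hnm HTpM HTM B I HI HB.
  assert (Hb : forall a, exists b : Tp, I a -> forall z, B a z -> wo_lt z b).
  { intros a. destruct (classic (I a)) as [Ia|Ia].
    - destruct (bounded T Tp (B a) HTp HTT Hnm) as [b Hb].
      + apply eqp_cl. apply otp_eqp. auto.
      + exists b; auto.
    - exists tp0; intros; contradiction. }
  destruct (choice_fun _ Hb) as [bf Hbf].
  destruct (PH M K Tp (all _) I bf m0 k0 HK HMM HI (fun _ _ => Logic.I) HTpM) as [b [_ H1]].
  destruct (proj2 HTp b) as [e [_ He]].
  set (code := fun a t => exists z, B a z /\ e z = t).
  destruct (PH M K (T -> Prop) (all _) _ code m0 k0 HK HMM H1 (fun _ _ => Logic.I) HTM) as [P [_ H2]].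
  exists (fun a => (I a /\ bf a = b) /\ code a = P). split; [|split]; auto.
  - intros a [[Ia _] _]; auto.
  - destruct (eqp_elem _ k0 H2) as [a0 Ha0]. exists a0. split; auto.
    assert (key : forall a a', ((I a /\ bf a = b) /\ code a = P) -> ((I a' /\ bf a' = b) /\ code a' = P) ->
              forall z, B a z -> B a' z).
    { intros a a' [[Ia Ea] Ca] [[Ia' Ea'] Ca'] z Bz.
      assert (Hc : code a (e z)) by (exists z; auto).
      rewrite Ca, <- Ca' in Hc. destruct Hc as [z' [Bz' Ez']].
      assert (z' = z).
      { apply He; unfold below.
        - rewrite <- Ea'. apply (Hbf a' Ia'); auto.
        - rewrite <- Ea. apply (Hbf a Ia); auto.
        - exact Ez'. }
      subst; auto. }
    intros a Ha z. split; apply key; auto.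
Qed.

Lemma main_gen (M T K Z Bt : WO) (Ch : Type) (A : K -> M -> Prop) (m0 : M) (k0 : K) (ch0 : Ch) :
  is_cardinal M -> is_succ_card M K -> scattered M T K A ->
  card_le (all (M * M)) (all M) -> card_le (all Ch) (all M) ->
  polarized Z T Bt T Ch -> homog K Z Bt ->
  forall c : M -> Z -> Ch,
    exists (A0 : M -> Prop) (B0 : Z -> Prop),
      otp_eq M A0 M /\ otp_eq Z B0 Bt /\
      (forall x y x' y', A0 x -> B0 y -> A0 x' -> B0 y' -> c x y = c x' y').
Proof.
  intros HM HK [Hs1 Hs2] HMM HCh Hpol Hhom c.
  assert (HF : forall a, exists f : M -> T, (forall x y, A a x -> A a y -> f x = f y -> x = y) /\
             (forall t, exists x, A a x /\ f x = t)).
  { intros a. destruct (Hs1 a) as [f [_ [H1 H2]]]. exists f. split; auto.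
    intros t. apply (H2 t Logic.I). }
  destruct (choice_fun _ HF) as [Fm HFm].
  assert (HG : forall a, exists g : T -> M, forall t, A a (g t) /\ Fm a (g t) = t).
  { intros a. apply (choice_fun (fun t x => A a x /\ Fm a x = t)). apply (proj2 (HFm a)). }
  destruct (choice_fun _ HG) as [Gi HGi].
  set (d := fun a z t => c (Gi a t) z).
  assert (HP : forall a, exists p : (Z -> Prop) * (T -> Prop),
     otp_eq Z (fst p) Bt /\ otp_eq T (snd p) T /\
     (forall x y x' y', fst p x -> snd p y -> fst p x' -> snd p y' -> d a x y = d a x' y')).
  { intros a. destruct (Hpol (d a)) as [B [a' H]]. exists (B, a'). exact H. }
  destruct (choice_fun _ HP) as [Pp HPp].
  set (Bf := fun a => fst (Pp a)). set (af := fun a => snd (Pp a)).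
  assert (HJ : forall a, exists j, forall z t, Bf a z -> af a t -> d a z t = j).
  { intros a. destruct (classic (exists z t, Bf a z /\ af a t)) as [[z [t [Hz Ht]]]|N].
    - exists (d a z t). intros z' t' Hz' Ht'. apply (HPp a); auto.
    - exists ch0. intros z t Hz Ht. exfalso. apply N. eauto. }
  destruct (choice_fun _ HJ) as [J HJs].
  assert (Hall : equipotent (all K) (all K)).
  { exists (fun x => x). split; [|split]; auto. intros y _. exists y. split; auto. exact Logic.I. }
  destruct (Hhom Bf (all K) Hall (fun a _ => proj1 (HPp a))) as [I' [_ [HI' [a0 [Ia0 Hiff]]]]].
  destruct (PH M K Ch (all Ch) I' J m0 k0 HK HMM HI' (fun _ _ => Logic.I) HCh) as [j [_ HI2]].
  set (I2 := fun a => I' a /\ J a = j) in HI2.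
  set (aa := fun a x => A a x /\ af a (Fm a x)).
  assert (Haa : forall a, I2 a -> (forall x, aa a x -> A a x) /\ equipotent (aa a) (all T)).
  { intros a _. split. intros x [H _]; auto.
    apply (eqp_trans _ (af a)).
    - exists (Fm a). split; [|split].
      + intros x [_ H]; auto.
      + intros x y [Hx _] [Hy _]. apply (proj1 (HFm a)); auto.
      + intros t Ht. exists (Gi a t). destruct (HGi a t) as [H1 H2]. split; auto.
        split; auto. rewrite H2; auto.
    - apply otp_eqp. apply (proj1 (proj2 (HPp a))). }
  pose proof (Hs2 I2 aa HI2 Haa) as HU.
  exists (fun x => exists a, I2 a /\ aa a x), (Bf a0). split; [|split].
  - apply card_otp; auto. apply (eqp_rev m0 _ _ HU).
  - apply (proj1 (HPp a0)).
  - assert (key : forall x y, (exists a, I2 a /\ aa a x) -> Bf a0 y -> c x y = j).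
    { intros x y [a [[Ia Ja] [Ax Hax]]] By.
      assert (Ex : Gi a (Fm a x) = x).
      { destruct (HGi a (Fm a x)) as [H1 H2]. apply (proj1 (HFm a)); auto. }
      rewrite <- Ja. rewrite <- Ex. apply (HJs a y (Fm a x)); auto.
      apply (Hiff a Ia). exact By. }
    intros x y x' y' Hx Hy Hx' Hy'. rewrite (key x y Hx Hy), (key x' y' Hx' Hy'). reflexivity.
Qed.

Lemma inh_of_lt {X Y : Type} (A : X -> Prop) : ~ card_le (all X) (all Y) -> exists x : X, True.
Proof.
  intros H. apply NNPP. intro N. apply H.
  exists (fun x => False_rect Y (N (ex_intro _ x Logic.I))). split.
  - intros x; destruct (N (ex_intro _ x Logic.I)).
  - intros x; destruct (N (ex_intro _ x Logic.I)).
Qed.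

Theorem claim3p2 (M T K Tp : WO) (Ch : Type) (A : K -> M -> Prop) :
  (* (a) mu > cf(mu) = theta, kappa = mu^+, 2^theta < kappa *)
  is_cardinal M ->
  is_cf M T ->
  card_lt (all T) (all M) ->
  is_succ_card M K ->
  card_lt (all (T -> bool)) (all K) ->
  (* theta^+ *)
  is_succ_card T Tp ->
  (* (b) the family A is mu-scattered *)
  scattered M T K A ->
  (* chi < theta *)
  card_lt (all Ch) (all T) ->
  ((* (c) *) polarized Tp T T T Ch -> polarized M Tp M T Ch) /\
  (polarized Tp T Tp T Ch -> card_lt (all (Tp -> bool)) (all K) ->
   polarized M Tp M Tp Ch).
Proof.
  intros HM Hcf HTM HK H2T HTp Hsc HChT.
  assert (Hsetup : forall (ch0 : Ch),
    exists (m0 : M) (k0 : K) (tp0 : Tp),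
      card_le (all (M * M)) (all M) /\ card_le (all (T * T)) (all T) /\
      (forall y : Tp, exists y', wo_lt y y') /\ card_le (all Tp) (all M) /\
      card_le (all (T -> Prop)) (all M) /\ card_le (all Ch) (all M)).
  { intros ch0.
    assert (Htwo : exists t1 t2 : T, t1 <> t2).
    { apply NNPP. intro N. apply (proj2 HChT). exists (fun _ => ch0). split.
      intros; exact Logic.I. intros x y _ _ _. apply NNPP. intro E. apply N. eauto. }
    destruct Htwo as [t1 [t2 Ht12]].
    assert (HMnm : forall x : M, exists y, wo_lt x y).
    { intros m. apply NNPP. intro N.
      destruct (proj2 Hcf (fun x => x = m)) as [f [Hf1 Hf2]].
      - intros x. exists m. split; auto. intro L. apply N. eauto.
      - destruct (wo_total T t1 t2) as [L|[E|L]]; [| contradiction |];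
        apply Hf2 in L; rewrite (Hf1 t1), (Hf1 t2) in L; apply (wo_irrefl _ _ L). }
    destruct (proj1 Hcf) as [C [HCc [g [Hg1 Hg2]]]].
    assert (HTnm : forall t : T, exists t', wo_lt t t').
    { intros t. destruct (Hg2 t) as [x [Cx Ex]]. destruct (HMnm x) as [x' Lx].
      destruct (HCc x') as [y [Cy Ny]]. exists (g y). rewrite <- Ex. apply Hg1; auto.
      destruct (wo_total M y x') as [L|[E|L]]; [contradiction| subst; auto |].
      apply (wo_trans _ _ _ _ Lx L). }
    destruct (Hg2 t1) as [m0 _].
    destruct (inh_of_lt (all K) (proj2 (proj1 HK))) as [k0 _].
    destruct (inh_of_lt (all Tp) (proj2 (proj1 HTp))) as [tp0 _].
    assert (HnT : card_le (all nat) (all T)) by (apply (nat_chain T t1); auto).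
    exists m0, k0, tp0.
    assert (HTT : card_le (all (T * T)) (all T)) by (apply (hess T t1); auto).
    split; [apply (hess M m0); auto|].
    split; [auto|].
    split; [apply (succ_nomax T Tp); auto|].
    split.
    { destruct (cmp Tp M m0) as [H|[x H]]; auto. exfalso. apply (proj2 HTM).
      apply (cl_trans _ _ _ H). apply (proj2 HTp). }
    split.
    { apply (cl_trans _ _ _ (prop_bool T)). apply (lt_K M K _ k0); auto. }
    apply (cl_trans _ _ _ (proj1 HChT)). apply (proj1 HTM). }
  split.
  - intros Hpol c.
    destruct (Hsetup (c (proj1_sig (constructive_indefinite_description _ (inh_of_lt (all M) (proj2 HTM)))) 
      (proj1_sig (constructive_indefinite_description _ (inh_of_lt (all Tp) (proj2 (proj1 HTp)))))))
      as [m0 [k0 [tp0 [HMM [HTT [Hnm [HTpM [HTPM HChM]]]]]]]].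
    apply (main_gen M T K Tp T Ch A m0 k0 (c m0 tp0)); auto.
    apply (homog_bounded M K T Tp m0 k0 tp0); auto.
  - intros Hpol H2Tp c.
    destruct (Hsetup (c (proj1_sig (constructive_indefinite_description _ (inh_of_lt (all M) (proj2 HTM)))) 
      (proj1_sig (constructive_indefinite_description _ (inh_of_lt (all Tp) (proj2 (proj1 HTp)))))))
      as [m0 [k0 [tp0 [HMM [HTT [Hnm [HTpM [HTPM HChM]]]]]]]].
    apply (main_gen M T K Tp Tp Ch A m0 k0 (c m0 tp0)); auto.
    apply (homog_direct M K Tp Tp m0 k0); auto.
    apply (cl_trans _ _ _ (prop_bool Tp)). apply (lt_K M K _ k0); auto.
Qed.
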